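(* Let $\mathcal{S}_{reb}\subset\mathbb{R}^3$ be the rebit state space. Then $$\sup\,\bar P(\mathsf{M}^{(1)},\mathsf{M}^{(2)})=\frac12\Big(1+\frac{1}{\sqrt2}\Big),$$ where the supremum ranges over all pairs of dichotomic measurements on $\mathcal{S}_{reb}$, and the supremum is attained.
   Context: The rebit state space is $\mathcal{S}_{reb}=\{(x,y,1)^T : x^2+y^2\le1\}$, whose pure states are $s_\theta=(\cos\theta,\sin\theta,1)^T$. Effects are linear functionals $e$ on $\mathbb{R}^3$ with $0\le e\le1$ on $\mathcal{S}_{reb}$; unit effect $u=(0,0,1)$ (acting by dot product); $\|f\|=\max_{s\in\mathcal{S}_{reb}}|f(s)|$. A dichotomic measurement is a pair of effects $\mathsf{M}_+,\mathsf{M}_-$ with $\mathsf{M}_++\mathsf{M}_-=u$, and $\bar P(\mathsf{M}^{(1)},\mathsf{M}^{(2)})=\frac18\sum_{x,y\in\{+,-\}}\|\mathsf{M}^{(1)}_x+\mathsf{M}^{(2)}_y\|$. *)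

(* Defs.v *)
From HB Require Import structures.
From mathcomp Require Import all_boot all_order all_algebra.
From mathcomp Require Import all_classical all_reals.
Set Implicit Arguments. Unset Strict Implicit. Unset Printing Implicit Defensive.
Import Order.TTheory GRing.Theory Num.Theory.
Local Open Scope classical_set_scope.
Local Open Scope ring_scope.

Section Rebit.
Variable R : realType.

Definition vec3 := (R * R * R)%type.
Definition mk3 (x y z : R) : vec3 := (x, y, z).
Definition c1 (v : vec3) : R := v.1.1.
Definition c2 (v : vec3) : R := v.1.2.
Definition c3 (v : vec3) : R := v.2.

Definition rebit_states : set vec3 :=
  [set s | c3 s = 1 /\ c1 s ^+ 2 + c2 s ^+ 2 <= 1].

(* a linear functional on R^3, identified with a vector, acting by dot product *)
Definition apply3 (f s : vec3) : R := c1 f * c1 s + c2 f * c2 s + c3 f * c3 s.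
Definition add3 (f g : vec3) : vec3 := mk3 (c1 f + c1 g) (c2 f + c2 g) (c3 f + c3 g).

Definition unit_eff : vec3 := mk3 0 0 1.

Definition is_effect (e : vec3) : Prop :=
  forall s, rebit_states s -> 0 <= apply3 e s <= 1.

(* ||f|| = max_{s in S_reb} |f(s)| (the max exists by compactness; taken as sup) *)
Definition fnorm (f : vec3) : R := sup [set `|apply3 f s| | s in rebit_states].

Definition dichotomic (M : vec3 * vec3) : Prop :=
  is_effect M.1 /\ is_effect M.2 /\ add3 M.1 M.2 = unit_eff.

Definition Pbar (M1 M2 : vec3 * vec3) : R :=
  8^-1 * (fnorm (add3 M1.1 M2.1) + fnorm (add3 M1.1 M2.2)
          + fnorm (add3 M1.2 M2.1) + fnorm (add3 M1.2 M2.2)).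

End Rebit.

(* Main.v *)
Require Import Defs.
From HB Require Import structures.
From mathcomp Require Import all_boot all_order all_algebra.
From mathcomp Require Import all_classical all_reals.
From mathcomp Require Import ring lra.
Import Order.TTheory GRing.Theory Num.Theory.
Local Open Scope classical_set_scope.
Local Open Scope ring_scope.

Section S.
Variable R : realType.

Lemma sup_max (E : set R) x : E x -> (forall y, E y -> y <= x) -> sup E = x.
Proof.
move=> Ex ub; apply/le_anti/andP; split.
  by apply: ge_sup; [exists x | move=> y /ub].
by apply: sup_upper_bound => //; split; [exists x | exists x => y /ub].
Qed.

Lemma st0 : @rebit_states R (mk3 0 0 1).
Proof. rewrite /rebit_states /c1 /c2 /c3 /=; split => //; lra. Qed.

Lemma bound_pt (f s : vec3 R) r : @rebit_states R s -> 0 <= r ->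
  c1 f ^+ 2 + c2 f ^+ 2 <= r ^+ 2 -> `|apply3 f s| <= `|c3 f| + r.
Proof.
move=> [s3 s12] r0 hr.
rewrite /apply3 s3 mulr1.
have h : `|c1 f * c1 s + c2 f * c2 s| <= r.
  have cs : (c1 f * c1 s + c2 f * c2 s)^+2 <= r^+2.
    apply: le_trans hr.
    have : (c1 f * c1 s + c2 f * c2 s)^+2 <= (c1 f ^+ 2 + c2 f ^+ 2) * (c1 s ^+ 2 + c2 s ^+ 2).
      have := sqr_ge0 (c1 f * c2 s - c2 f * c1 s).
      move: (c1 f) (c2 f) (c1 s) (c2 s) => a b x y ?; nra.
    move=> H; apply: le_trans H _.
    have : 0 <= c1 f ^+ 2 + c2 f ^+ 2 by nra.
    nra.
  rewrite ler_norml; apply/andP; split; nra.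
apply: le_trans (ler_normD _ _) _; lra.
Qed.

Lemma fnorm_le (f : vec3 R) r : 0 <= r -> c1 f ^+ 2 + c2 f ^+ 2 <= r ^+ 2 ->
  fnorm f <= `|c3 f| + r.
Proof.
move=> r0 hr; apply: ge_sup; first by exists `|apply3 f (mk3 0 0 1)|, (mk3 0 0 1); [exact: st0|].
by move=> y [s hs <-]; apply: bound_pt.
Qed.

Lemma sqr_sq (x : R) : 0 <= x -> Num.sqrt x ^+ 2 = x.
Proof. by move=> h; rewrite sqr_sqrtr. Qed.

Lemma fnorm_ge (f s : vec3 R) : @rebit_states R s -> `|apply3 f s| <= fnorm f.
Proof.
move=> hs.
have h0 : 0 <= c1 f ^+ 2 + c2 f ^+ 2 by nra.
apply: sup_upper_bound; last by exists s.
split; first by exists `|apply3 f s|, s.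
exists (`|c3 f| + Num.sqrt (c1 f ^+ 2 + c2 f ^+ 2)) => y [t ht <-].
by apply: bound_pt => //; [exact: sqrtr_ge0 | rewrite sqr_sq].
Qed.

Lemma st_dir (a b r : R) : 0 < r -> r ^+ 2 = a ^+ 2 + b ^+ 2 ->
  @rebit_states R (mk3 (a / r) (b / r) 1) /\ forall f : vec3 R, c1 f = a -> c2 f = b -> apply3 f (mk3 (a / r) (b / r) 1) = c3 f + r.
Proof.
move=> r0 hr; have rn : r != 0 by rewrite gt_eqF.
split.
  rewrite /rebit_states /c1 /c2 /c3 /=; split => //.
  rewrite !expr_div_n -mulrDl -hr divff ?expf_neq0 //.
move=> f ha hb; rewrite /apply3 ha hb /c1 /c2 /c3 /= mulr1.
have -> : a * (a / r) + b * (b / r) = (a ^+ 2 + b ^+ 2) / r by rewrite !expr2; field.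
by rewrite -hr expr2 mulrK ?unitfE // addrC.
Qed.


Lemma fnorm_le' (g : vec3 R) : fnorm g <= `|c3 g| + Num.sqrt (c1 g ^+ 2 + c2 g ^+ 2).
Proof.
have h0 : 0 <= c1 g ^+ 2 + c2 g ^+ 2 by nra.
by apply: fnorm_le; [exact: sqrtr_ge0 | rewrite sqr_sq].
Qed.

Lemma fnorm_exact (g : vec3 R) r : 0 <= c3 g -> 0 < r -> r ^+ 2 = c1 g ^+ 2 + c2 g ^+ 2 ->
  fnorm g = c3 g + r.
Proof.
move=> c0 r0 hr; apply/le_anti/andP; split.
  by rewrite -[X in X + r](ger0_norm c0); apply: fnorm_le; [exact: ltW | rewrite hr].
have [hs hv] := st_dir _ _ _ r0 hr.
have := fnorm_ge g _ hs; rewrite hv // ger0_norm //; apply: addr_ge0 => //; exact: ltW.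
Qed.

Lemma effect_props (e : vec3 R) : is_effect e ->
  0 <= c3 e <= 1 /\ c1 e ^+ 2 + c2 e ^+ 2 <= 4^-1.
Proof.
move=> he.
have := he _ st0; rewrite /apply3 /c1 /c2 /c3 /= !mulr0 !add0r mulr1 => hc.
split => //.
have [q0|qn] := eqVneq (c1 e ^+ 2 + c2 e ^+ 2) 0.
  rewrite q0; lra.
have qp : 0 < c1 e ^+ 2 + c2 e ^+ 2 by rewrite lt_def qn /=; nra.
set q := c1 e ^+ 2 + c2 e ^+ 2 in qn qp *.
set r := Num.sqrt q.
have r0 : 0 < r by rewrite sqrtr_gt0.
have hr : r ^+ 2 = q by rewrite sqr_sq // ltW.
have hr' : r ^+ 2 = (- c1 e) ^+ 2 + (- c2 e) ^+ 2 by rewrite !sqrrN.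
have [hs1 _] := st_dir _ _ _ r0 hr.
have [hs2 _] := st_dir _ _ _ r0 hr'.
have rn : r != 0 by rewrite gt_eqF.
have v1 : apply3 e (mk3 (c1 e / r) (c2 e / r) 1) = c3 e + r.
  rewrite /apply3 /c1 /c2 /c3 /= mulr1.
  have -> : e.1.1 * (e.1.1 / r) + e.1.2 * (e.1.2 / r) = (e.1.1 ^+ 2 + e.1.2 ^+ 2) / r by rewrite !expr2; field.
  by rewrite -/(c1 e) -/(c2 e) -/q -hr expr2 mulrK ?unitfE // addrC.
have v2 : apply3 e (mk3 (- c1 e / r) (- c2 e / r) 1) = c3 e - r.
  rewrite /apply3 /c1 /c2 /c3 /= mulr1.
  have -> : e.1.1 * (- e.1.1 / r) + e.1.2 * (- e.1.2 / r) = - ((e.1.1 ^+ 2 + e.1.2 ^+ 2) / r) by rewrite !expr2; field.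
  by rewrite -/(c1 e) -/(c2 e) -/q -hr expr2 mulrK ?unitfE // addrC.
have := he _ hs1; have := he _ hs2; rewrite v1 v2 => /andP[h1 h2] /andP[h3 h4].
rewrite -hr; nra.
Qed.


Lemma sqrt2_facts : let s := Num.sqrt (2 : R) in 0 < s /\ s ^+ 2 = 2 /\ s^-1 = s / 2.
Proof.
move=> s; have s0 : 0 < s by rewrite sqrtr_gt0; lra.
have s2 : s ^+ 2 = 2 by rewrite sqr_sq //; lra.
split => //; split => //.
have sn : s != 0 by rewrite gt_eqF.
by rewrite -{1}s2 expr2 invfM mulrA divff // mul1r.
Qed.

Lemma Pbar_le (M1 M2 : vec3 R * vec3 R) : dichotomic M1 -> dichotomic M2 ->
  Pbar M1 M2 <= 2^-1 * (1 + (Num.sqrt (2 : R))^-1).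
Proof.
case: M1 => [[[a1 b1] z1] [[a1' b1'] z1']].
case: M2 => [[[a2 b2] z2] [[a2' b2'] z2']].
move=> [h1 [_ H1]] [h2 [_ H2]].
move: H1 H2; rewrite /add3 /unit_eff /mk3 /c1 /c2 /c3 /= => [[E1 F1 G1]] [[E2 F2 G2]].
have -> : a1' = - a1 by lra.
have -> : b1' = - b1 by lra.
have -> : z1' = 1 - z1 by lra.
have -> : a2' = - a2 by lra.
have -> : b2' = - b2 by lra.
have -> : z2' = 1 - z2 by lra.
have [/andP[p1 p1'] q1] := effect_props _ h1.
have [/andP[p2 p2'] q2] := effect_props _ h2.
move: p1 p1' q1 p2 p2' q2; rewrite /c1 /c2 /c3 /= => p1 p1' q1 p2 p2' q2.
rewrite /Pbar /=.
set g1 := add3 _ _; set g2 := add3 _ _; set g3 := add3 _ _; set g4 := add3 _ _.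
have k1 := fnorm_le' g1; have k2 := fnorm_le' g2.
have k3 := fnorm_le' g3; have k4 := fnorm_le' g4.
move: k1 k2 k3 k4; rewrite /g1 /g2 /g3 /g4 /add3 /mk3 /c1 /c2 /c3 /=.
set p := Num.sqrt ((a1 + a2) ^+ 2 + (b1 + b2) ^+ 2).
set q := Num.sqrt ((a1 + - a2) ^+ 2 + (b1 + - b2) ^+ 2).
have -> : (- a1 + a2) ^+ 2 + (- b1 + b2) ^+ 2 = (a1 + - a2) ^+ 2 + (b1 + - b2) ^+ 2 by ring.
have -> : (- a1 + - a2) ^+ 2 + (- b1 + - b2) ^+ 2 = (a1 + a2) ^+ 2 + (b1 + b2) ^+ 2 by ring.
rewrite -/p -/q.
rewrite !ger0_norm; try lra.
move=> k1 k2 k3 k4.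
have p0 : 0 <= p by exact: sqrtr_ge0.
have q0 : 0 <= q by exact: sqrtr_ge0.
have pp : p ^+ 2 = (a1 + a2) ^+ 2 + (b1 + b2) ^+ 2 by rewrite sqr_sq // addr_ge0 ?sqr_ge0.
have qq : q ^+ 2 = (a1 + - a2) ^+ 2 + (b1 + - b2) ^+ 2 by rewrite sqr_sq // addr_ge0 ?sqr_ge0.
have [s0 [s2 si]] := sqrt2_facts.
rewrite si.
set s := Num.sqrt 2 in s0 s2 *.
have e : p ^+ 2 + q ^+ 2 = 2 * (a1 ^+ 2 + b1 ^+ 2 + (a2 ^+ 2 + b2 ^+ 2)) by rewrite pp qq; ring.
have e2 : (p + q) ^+ 2 <= 2 * (p ^+ 2 + q ^+ 2).
  have := sqr_ge0 (p - q); rewrite !expr2; lra.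
have pq2 : (p + q) ^+ 2 <= 2 by lra.
have pqs : p + q <= s by nra.
lra.
Qed.


Lemma eff_half (a b : R) : a ^+ 2 + b ^+ 2 = 4^-1 -> is_effect (mk3 a b 2^-1).
Proof.
move=> hab s [s3 s12]; rewrite /apply3 s3 /c1 /c2 /c3 /= mulr1.
have h : (a * s.1.1 + b * s.1.2) ^+ 2 <= 4^-1.
  have := sqr_ge0 (a * s.1.2 - b * s.1.1).
  move: s12; rewrite /c1 /c2; move: (s.1.1) (s.1.2) => x y hxy hh.
  have : (a * x + b * y) ^+ 2 <= (a ^+ 2 + b ^+ 2) * (x ^+ 2 + y ^+ 2) by nra.
  rewrite hab; nra.
apply/andP; split; nra.
Qed.

Lemma attain : exists M1 M2 : vec3 R * vec3 R, dichotomic M1 /\ dichotomic M2 /\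
       Pbar M1 M2 = 2^-1 * (1 + (Num.sqrt (2 : R))^-1).
Proof.
exists (mk3 2^-1 0 2^-1, mk3 (- 2^-1) 0 2^-1), (mk3 0 2^-1 2^-1, mk3 0 (- 2^-1) 2^-1).
have q1 : (2^-1 : R) ^+ 2 + 0 ^+ 2 = 4^-1 by rewrite expr2; field.
have q2 : (- 2^-1 : R) ^+ 2 + 0 ^+ 2 = 4^-1 by rewrite expr2; field.
have q3 : 0 ^+ 2 + (2^-1 : R) ^+ 2 = 4^-1 by rewrite expr2; field.
have q4 : 0 ^+ 2 + (- 2^-1 : R) ^+ 2 = 4^-1 by rewrite expr2; field.
split; first (split; [exact: eff_half|split; [exact: eff_half|]]).
  by rewrite /add3 /unit_eff /mk3 /c1 /c2 /c3 /=; congr (_, _, _); field.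
split; first (split; [exact: eff_half|split; [exact: eff_half|]]).
  by rewrite /add3 /unit_eff /mk3 /c1 /c2 /c3 /=; congr (_, _, _); field.
have [s0 [s2 si]] := sqrt2_facts.
rewrite si.
set s := Num.sqrt 2 in s0 s2 *.
have r0 : 0 < s / 2 by lra.
have E : forall g : vec3 R, c3 g = 1 -> c1 g ^+ 2 + c2 g ^+ 2 = 2^-1 -> fnorm g = 1 + s / 2.
  move=> g h3 h12.
  have hr : (s / 2) ^+ 2 = c1 g ^+ 2 + c2 g ^+ 2 by rewrite h12 expr_div_n s2; field.
  have c0 : 0 <= c3 g by rewrite h3; lra.
  by rewrite (fnorm_exact _ _ c0 r0 hr) h3.
rewrite /Pbar /= !E.
1: lra.
all: rewrite /add3 /mk3 /c1 /c2 /c3 /= ?expr2.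
all: by field.
Qed.

End S.

Theorem mainTheorem14 (R : realType) :
  sup [set Pbar M1 M2 | M1 in [set M : vec3 R * vec3 R | dichotomic M] &
                        M2 in [set M : vec3 R * vec3 R | dichotomic M]]
    = 2^-1 * (1 + (Num.sqrt (2 : R))^-1)
  /\ exists M1 M2 : vec3 R * vec3 R, dichotomic M1 /\ dichotomic M2 /\
       Pbar M1 M2 = 2^-1 * (1 + (Num.sqrt (2 : R))^-1).
Proof.
have [M1 [M2 [d1 [d2 e]]]] := attain R.
split; last by exists M1, M2.
apply: (@sup_max R).
  exists M1; first exact: d1.
  by exists M2.
move=> y [N1 n1 [N2 n2 <-]].
exact: Pbar_le.
Qed.
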